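(* Let $G$ be a connected partial cube with $\Theta$-classes $E_1,\ldots,E_d$. For each $k$ let $U_k$ and $U_k'$ be the two connected components of $G-E_k$, and for $k,l\in\{1,\ldots,d\}$ set $m_{kl}^{11}=|E(U_k)\cap E(U_l)|$, $m_{kl}^{10}=|E(U_k)\cap E(U_l')|$, $m_{kl}^{01}=|E(U_k')\cap E(U_l)|$, $m_{kl}^{00}=|E(U_k')\cap E(U_l')|$. Then $$\sum_{e\in E(G)}\sum_{f\in E(G)}\widehat{d}(e,f)^2=2\widehat{W}_e(G)+4\sum_{k=1}^{d-1}\sum_{l=k+1}^{d}\big(m_{kl}^{11}m_{kl}^{00}+m_{kl}^{10}m_{kl}^{01}\big).$$
   Context: A partial cube is a graph isomorphic to an isometric subgraph of a hypercube. The Djoković–Winkler relation $\Theta$ on $E(G)$: $xy\,\Theta\,uv$ iff $d(x,u)+d(y,v)\neq d(x,v)+d(y,u)$, with $d$ the shortest-path distance. In a partial cube $\Theta$ is an equivalence relation whose classes are the $\Theta$-classes, and removing the edges of a $\Theta$-class leaves exactly two connected components. For edges $e=ab$, $f=xy$, $\widehat{d}(e,f)=\min\{d(a,x),d(a,y),d(b,x),d(b,y)\}$ (so $\widehat d(e,e)=0$), and $\widehat{W}_e(G)=\sum_{\{e,f\}\subseteq E(G)}\widehat{d}(e,f)$, the sum over unordered pairs of distinct edges. *)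

(* Defs.v *)
(* A finite simple graph is a symmetric irreflexive relation
   [g : rel T] on a finType T. *)
From mathcomp Require Import all_boot.
Set Implicit Arguments. Unset Strict Implicit. Unset Printing Implicit Defensive.

Section Graph.
Variables (T : finType) (g : rel T).

Fixpoint walkn (n : nat) (x y : T) : bool :=
  if n is n'.+1 then [exists z, g x z && walkn n' z y] else x == y.

(* shortest-path distance: least n with a walk of length n (a shortest walk
   is a path, of length < #|T| in a connected graph) *)
Definition gdist (x y : T) : nat := find (fun n => walkn n x y) (iota 0 #|T|).

Definition edges : {set {set T}} := [set [set p.1; p.2] | p in [set p : T * T | g p.1 p.2]].

Definition edges_in (U : {set T}) : {set {set T}} := [set f in edges | f \subset U].

Definition edist (E F : {set T}) : nat :=
  \big[minn/#|T|]_(a in E) \big[minn/#|T|]_(b in F) gdist a b.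

(* \hat W_e(G): sum over unordered pairs of distinct edges *)
Definition edge_wiener : nat :=
  \sum_(E in edges) \sum_(F in edges | enum_rank E < enum_rank F) edist E F.

(* Djokovic-Winkler relation on edges (independent of endpoint labelling) *)
Definition theta (E F : {set T}) : bool :=
  [exists x, exists y, exists u, exists v,
    [&& E == [set x; y], F == [set u; v], g x y, g u v &
        gdist x u + gdist y v != gdist x v + gdist y u]].

Definition theta_class (C : {set {set T}}) : Prop :=
  exists2 f, f \in edges & C = [set h in edges | theta f h].

Definition simple_graph : Prop := symmetric g /\ irreflexive g.
Definition connected_graph : Prop := forall x y, connect g x y.

Definition partial_cube : Prop :=
  exists n (f : T -> {ffun 'I_n -> bool}),
    forall x y, gdist x y = #|[set i | f x i != f y i]|.

Definition del_edges (C : {set {set T}}) : rel T :=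
  [rel x y | g x y && ([set x; y] \notin C)].

Definition component_of (C : {set {set T}}) (U : {set T}) : Prop :=
  exists x, U = [set y | connect (del_edges C) x y].

End Graph.

(* Main.v *)
Require Import Defs.
From mathcomp Require Import all_boot.
Set Implicit Arguments. Unset Strict Implicit. Unset Printing Implicit Defensive.

Lemma sum_pairs (I : finType) (P : pred I) (r : I -> nat) (w : I -> I -> nat) :
  injective r -> (forall i j, P i -> P j -> w i j = w j i) ->
  \sum_(i | P i) \sum_(j | P j) w i j
  = \sum_(i | P i) w i i + 2 * \sum_(i | P i) \sum_(j | P j && (r i < r j)) w i j.
Proof.
move=> rinj wsym.
have e1 : forall i, P i -> \sum_(j | P j) w i j = w i i + \sum_(j | P j && (r i < r j)) w i j
   + \sum_(j | P j && (r j < r i)) w i j.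
  move=> i hi; rewrite (bigD1 i) //= -addnA; congr (_ + _).
  rewrite (bigID (fun j => r i < r j)) /=; congr (_ + _); apply: eq_bigl => j.
  - by case: (eqVneq j i) => [->|nji]; rewrite ?ltnn ?andbF ?andbT.
  - case: (eqVneq j i) => [->|nji]; rewrite ?ltnn ?andbF ?andbT //.
    by rewrite -leqNgt ltn_neqAle (inj_eq rinj) nji.
rewrite (eq_bigr _ e1) !big_split /=.
rewrite mul2n -addnA -addnn; congr (_ + (_ + _)).
rewrite (exchange_big_dep P) /=; last by move=> i j _ /andP[].
apply: eq_bigr => j hj; apply: eq_big => i.
  by rewrite hj.
by case/andP => hi _; rewrite wsym.
Qed.

From mathcomp Require Import zify.

Section Count.
Variables (T : finType) (g : rel T).

Definition sv (A A' : {set T}) (e F : {set T}) : nat :=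
  ((e \subset A) && (F \subset A')) + ((e \subset A') && (F \subset A)).

Lemma mE A B : #|edges_in g A :&: edges_in g B| =
  \sum_(e in edges g) ((e \subset A) && (e \subset B) : nat).
Proof.
rewrite -sum1_card big_mkcond [RHS]big_mkcond /=; apply: eq_bigr => e _.
rewrite !inE; by case: (e \in edges g); case: (e \subset A); case: (e \subset B).
Qed.

Lemma count_pairs (Ak Ak' Al Al' : {set T}) :
  let m (A B : {set T}) := #|edges_in g A :&: edges_in g B| in
  \sum_(e in edges g) \sum_(F in edges g) (sv Ak Ak' e F * sv Al Al' e F)
  = 2 * (m Ak Al * m Ak' Al' + m Ak Al' * m Ak' Al).
Proof.
move=> m.
have hp : forall e F : {set T}, sv Ak Ak' e F * sv Al Al' e F =
   ((e \subset Ak) && (e \subset Al)) * ((F \subset Ak') && (F \subset Al'))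
 + ((e \subset Ak) && (e \subset Al')) * ((F \subset Ak') && (F \subset Al))
 + ((e \subset Ak') && (e \subset Al)) * ((F \subset Ak) && (F \subset Al'))
 + ((e \subset Ak') && (e \subset Al')) * ((F \subset Ak) && (F \subset Al)).
  move=> e F; rewrite /sv.
  by case: (e \subset Ak) (e \subset Ak') (e \subset Al) (e \subset Al')
    (F \subset Ak) (F \subset Ak') (F \subset Al) (F \subset Al') => [] [] [] [] [] [] [] [].
transitivity (m Ak Al * m Ak' Al' + m Ak Al' * m Ak' Al + m Ak' Al * m Ak Al'
   + m Ak' Al' * m Ak Al); last by lia.
rewrite /m !mE !big_distrlr -!big_split /=.
apply: eq_bigr => e _; rewrite -!big_split; apply: eq_bigr => F _; exact: hp.
Qed.

End Count.


Lemma bigmin_le (I : eqType) (r : seq I) (P : pred I) (F : I -> nat) x0 i :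
  i \in r -> P i -> \big[minn/x0]_(j <- r | P j) F j <= F i.
Proof.
elim: r => //= j r IH; rewrite inE big_cons => /orP[/eqP<-|hi] hP.
  by rewrite hP geq_minl.
case: (P j); last exact: IH hi hP.
exact: leq_trans (geq_minr _ _) (IH hi hP).
Qed.

Lemma card_sumP (I : finType) (P : pred I) : #|[set j | P j]| = \sum_j (P j : nat).
Proof.
rewrite -sum1_card big_mkcond /=; apply: eq_bigr => j _; rewrite inE; by case: (P j).
Qed.

Section Basic.
Variables (T : finType) (g : rel T).

Lemma walk_path (p : seq T) (x : T) : path g x p -> walkn g (size p) x (last x p).
Proof.
elim: p x => [|z p IH] x /=; first by rewrite eqxx.
case/andP=> gxz hp; apply/existsP; exists z; rewrite gxz /=; exact: IH.
Qed.

Hypothesis Hc : connected_graph g.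
Hypothesis Hs : simple_graph g.

Lemma exists_walk x y : exists2 m, m < #|T| & walkn g m x y.
Proof.
have /connectP[p hp ->] := Hc x y.
case/shortenP: hp => p' hp' hu _.
exists (size p'); last exact: walk_path.
have := max_card (mem (x :: p')). by rewrite (card_uniqP hu).
Qed.

Lemma gdist_walk x y : gdist g x y < #|T| /\ walkn g (gdist g x y) x y.
Proof.
have [m hm hw] := exists_walk x y.
have hh : has (fun n => walkn g n x y) (iota 0 #|T|).
  by apply/hasP; exists m => //; rewrite mem_iota.
have hlt : gdist g x y < #|T|.
  by rewrite /gdist -[X in _ < X](size_iota 0) -has_find.
split => //; have := nth_find 0 hh; rewrite nth_iota ?add0n //.
Qed.

Lemma gdist_le m x y : walkn g m x y -> gdist g x y <= m.
Proof.
move=> hw; have [hlt _] := gdist_walk x y.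
case: (leqP #|T| m) => hm; first by apply: ltnW; apply: leq_trans hlt hm.
rewrite leqNgt; apply/negP => hf.
have := before_find 0 hf; rewrite nth_iota // add0n hw. by [].
Qed.

Lemma gdist_eq0 x y : gdist g x y = 0 -> x = y.
Proof. move=> h; have [_] := gdist_walk x y; rewrite h /=; by move/eqP. Qed.

Lemma gdist_adj x y : g x y -> gdist g x y = 1.
Proof.
move=> gxy; apply/eqP; rewrite eqn_leq; apply/andP; split.
  apply: gdist_le => /=; apply/existsP; exists y; by rewrite gxy eqxx.
rewrite lt0n; apply/eqP => /gdist_eq0 exy; move: gxy; rewrite exy (proj2 Hs) //.
Qed.

Lemma step x y : x != y -> exists2 z, g x z & gdist g z y < gdist g x y.
Proof.
move=> nxy; have [_] := gdist_walk x y.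
case e: (gdist g x y) => [|h] /=; first by move/eqP => exy; rewrite exy eqxx in nxy.
case/existsP => z /andP[gxz hw]; exists z => //; rewrite ltnS; exact: gdist_le.
Qed.

Lemma edgesP e : reflect (exists x y, g x y /\ e = [set x; y]) (e \in edges g).
Proof.
apply: (iffP imsetP) => [[[x y]] /= |[x [y [gxy ->]]]].
  rewrite inE /= => gxy ->; by exists x, y.
by exists (x, y); rewrite // inE.
Qed.

Variables (n : nat) (f : T -> {ffun 'I_n -> bool}).
Hypothesis Hf : forall x y, gdist g x y = #|[set i | f x i != f y i]|.

Lemma adj_flip x y : g x y -> exists i, forall j, f y j = f x j (+) (j == i).
Proof.
move=> gxy; have := gdist_adj gxy; rewrite Hf => /eqP/cards1P[i hi].
exists i => j; move/setP: hi => /(_ j); rewrite !inE => <-.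
by case: (f x j) (f y j) => [] [].
Qed.

Lemma step_flip x z y i : (forall j, f z j = f x j (+) (j == i)) ->
  gdist g z y < gdist g x y -> f x i != f y i.
Proof.
move=> hz hlt; apply/negP => /eqP hi; move: hlt; rewrite !Hf ltnNge => /negP; apply.
apply: subset_leq_card; apply/subsetP => j; rewrite !inE hz.
case: (eqVneq j i) => [->|_]; first by rewrite hi eqxx.
by rewrite addbF.
Qed.

Definition cut (e : {set T}) (c : 'I_n) := [exists p in e, exists q in e, f p c != f q c].

Lemma cut2 x y c : cut [set x; y] c = (f x c != f y c).
Proof.
apply/existsP/idP => [[p /andP[hp /existsP[q /andP[hq hpq]]]]|h].
  move: hp hq hpq; rewrite !inE => /orP[]/eqP-> /orP[]/eqP->; rewrite ?eqxx //.
  by rewrite eq_sym.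
exists x; rewrite !inE eqxx /=; apply/existsP; exists y; by rewrite !inE eqxx orbT h.
Qed.

Lemma cut_flip x y i : (forall j, f y j = f x j (+) (j == i)) ->
  forall c, cut [set x; y] c = (c == i).
Proof. move=> hy c; rewrite cut2 hy; by case: (f x c); case: (c == i). Qed.

Lemma edge_cut e : e \in edges g -> exists i, forall c, cut e c = (c == i).
Proof.
case/edgesP=> x [y [gxy ->]]; have [i hi] := adj_flip gxy; exists i; exact: cut_flip.
Qed.

Lemma bool_theta (a b p q : bool) : ~~ (p && q) ->
  ((a != b) + (a (+) p != b (+) q) = (a != b (+) q) + (a (+) p != b))%N.
Proof. by case: a b p q => [] [] [] []. Qed.

Lemma theta_cond x y u v i i' :
  (forall j, f y j = f x j (+) (j == i)) -> (forall j, f v j = f u j (+) (j == i')) ->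
  (gdist g x u + gdist g y v != gdist g x v + gdist g y u) = (i == i').
Proof.
move=> hy hv; rewrite !Hf !card_sumP -!big_split /=.
case: (eqVneq i i') hv => [<-|nii'] hv.
  rewrite [X in X != _](bigD1 i) // [X in _ != X](bigD1 i) //=.
  rewrite [X in _ + X != _](eq_bigr (fun j => (f x j != f v j) + (f y j != f u j))).
    rewrite eqn_add2r hy hv eqxx; by case: (f x i) (f u i) => [] [].
  move=> j /negbTE hj; rewrite hy hv hj; apply: bool_theta.
  by rewrite andbF.
apply/negbTE; rewrite negbK; apply/eqP; apply: eq_bigr => j _; rewrite hy hv.
apply: bool_theta; apply/negP => /andP[/eqP ji /eqP ji'].
by rewrite -ji -ji' eqxx in nii'.
Qed.

Lemma theta_cut e h : e \in edges g -> h \in edges g ->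
  theta g e h = [exists c, cut e c && cut h c].
Proof.
move=> he hh; apply/idP/idP.
- case/existsP=> x /existsP[y /existsP[u /existsP[v /and5P[/eqP ee /eqP eh gxy guv hc]]]].
  have [i hi] := adj_flip gxy; have [i' hi'] := adj_flip guv.
  rewrite (theta_cond hi hi') in hc; apply/existsP; exists i.
  by rewrite ee eh (cut_flip hi) (cut_flip hi') (eqP hc) eqxx.
- case/existsP=> c /andP[hce hch].
  case/edgesP: he hce => x [y [gxy ee]]; case/edgesP: hh hch => u [v [guv eh]].
  have [i hi] := adj_flip gxy; have [i' hi'] := adj_flip guv.
  subst e h; rewrite (cut_flip hi) (cut_flip hi') => /eqP ci /eqP ci'.
  apply/existsP; exists x; apply/existsP; exists y; apply/existsP; exists u; apply/existsP; exists v.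
  by rewrite !eqxx gxy guv (theta_cond hi hi') -ci -ci' eqxx.
Qed.


Lemma halfspace (C : {set {set T}}) c :
  (forall a b, g a b -> ([set a; b] \in C) = cut [set a; b] c) ->
  forall x y, connect (del_edges g C) x y = (f x c == f y c).
Proof.
move=> hC x y; apply/idP/idP.
- case/connectP=> p hp ->; elim: p x hp => [|z p IH] x /=; first by rewrite eqxx.
  case/andP=> /andP[gxz hn] hp; rewrite hC // cut2 negbK in hn.
  by rewrite (eqP hn) IH.
- move: {2}(gdist g x y) (leqnn (gdist g x y)) => m.
  elim: m x => [|m IH] x hm hxy; have [->|nxy] := eqVneq x y; try exact: connect0;
    have [z gxz hlt] := step nxy; first by have := leq_trans hlt hm.
  have [i hi] := adj_flip gxz.
  have hxi := step_flip hi hlt.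
  have nci : c != i by apply/eqP => ci; rewrite -ci (eqP hxy) eqxx in hxi.
  have hzc : f z c = f x c by rewrite hi (negbTE nci) addbF.
  apply: (connect_trans (connect1 _) (IH z _ _)).
  + by rewrite /del_edges /= gxz hC // cut2 hzc eqxx.
  + by rewrite -ltnS; apply: leq_trans hlt hm.
  + by rewrite hzc.
Qed.

Lemma cut_edge p q c : f p c != f q c -> exists2 h, h \in edges g & cut h c.
Proof.
move: {2}(gdist g p q) (leqnn (gdist g p q)) => m.
elim: m p => [|m IH] p hm hpq; have [epq|npq] := eqVneq p q;
  try by rewrite epq eqxx in hpq.
  have [z gpz hlt] := step npq; first by have := leq_trans hlt hm.
have [z gpz hlt] := step npq.
have [i hi] := adj_flip gpz.
case: (eqVneq c i) => [ci|nci].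
  exists [set p; z]; first by apply/edgesP; exists p, z.
  by rewrite (cut_flip hi) ci eqxx.
apply: (IH z).
  by rewrite -ltnS; apply: leq_trans hlt hm.
by rewrite hi (negbTE nci) addbF.
Qed.

Definition Sep (e F : {set T}) := [set c | [forall p in e, forall q in F, f p c != f q c]].

Lemma Sep2 x y u v c : (c \in Sep [set x; y] [set u; v]) =
  [&& f x c != f u c, f x c != f v c, f y c != f u c & f y c != f v c].
Proof.
rewrite inE; apply/forall_inP/and4P => [h|[h1 h2 h3 h4] p].
  have H p q : p \in [set x; y] -> q \in [set u; v] -> f p c != f q c.
    by move=> hp hq; exact: (forall_inP (h p hp) q hq).
  by split; apply: H; rewrite !inE eqxx ?orbT.
rewrite !inE => /orP[]/eqP->; apply/forall_inP => q; rewrite !inE => /orP[]/eqP-> //.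
Qed.

Lemma edist_S e F : e \in edges g -> F \in edges g -> edist g e F = #|Sep e F|.
Proof.
move=> he hF; have he' := he; have hF' := hF.
case/edgesP: he => x [y [gxy ee]]; case/edgesP: hF => u [v [guv eF]].
have [i hy] := adj_flip gxy; have [j hv] := adj_flip guv.
have low : forall a b, a \in e -> b \in F -> #|Sep e F| <= gdist g a b.
  move=> a b ha hb; rewrite Hf; apply: subset_leq_card; apply/subsetP => c.
  rewrite !inE => /forall_inP/(_ a ha)/forall_inP/(_ b hb); by [].
have hxe : x \in e by rewrite ee !inE eqxx.
have huF : u \in F by rewrite eF !inE eqxx.
apply/eqP; rewrite eqn_leq; apply/andP; split; last first.
  apply: (big_ind (fun v => #|Sep e F| <= v)).
  - apply: leq_trans (low _ _ hxe huF) _; apply: ltnW; by case: (gdist_walk x u).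
  - by move=> ? ? h1 h2; rewrite leq_min h1 h2.
  move=> a ha; apply: (big_ind (fun v => #|Sep e F| <= v)).
  - apply: leq_trans (low _ _ ha huF) _; apply: ltnW; by case: (gdist_walk a u).
  - by move=> ? ? h1 h2; rewrite leq_min h1 h2.
  by move=> b hb; apply: low.
pose a := if f x i == f u i then x else y.
have ha : a \in e by rewrite ee /a; case: ifP; rewrite !inE eqxx ?orbT.
have hai : f a i = f u i.
  rewrite /a; case: ifP => [/eqP //|]; rewrite hy eqxx.
  by case: (f x i) (f u i) => [] [].
pose b := if f u j == f a j then u else v.
have hb : b \in F by rewrite eF /b; case: ifP; rewrite !inE eqxx ?orbT.
have hbj : f b j = f a j.
  rewrite /b; case: ifP => [/eqP //|]; rewrite hv eqxx.
  by case: (f u j) (f a j) => [] [].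
apply: leq_trans (bigmin_le _ _ (mem_index_enum a) ha) _.
apply: leq_trans (bigmin_le _ _ (mem_index_enum b) hb) _.
rewrite Hf; apply: subset_leq_card; apply/subsetP => c; rewrite !inE => hc.
have ncj : c != j by apply/eqP => cj; rewrite cj hbj eqxx in hc.
have nci : c != i.
  apply/eqP => ci; subst c; move: hc; rewrite hai.
  by move: hb; rewrite eF !inE => /orP[]/eqP->; rewrite ?hv ?(negbTE ncj) ?addbF eqxx.
have hpe : forall p, p \in e -> f p c = f a c.
  have hx : forall p, p \in e -> f p c = f x c.
    by move=> p; rewrite ee !inE => /orP[]/eqP->; rewrite ?hy ?(negbTE nci) ?addbF.
  by move=> p hp; rewrite (hx p hp) (hx a ha).
have hqF : forall q, q \in F -> f q c = f b c.
  have hx : forall q, q \in F -> f q c = f u c.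
    by move=> q; rewrite eF !inE => /orP[]/eqP->; rewrite ?hv ?(negbTE ncj) ?addbF.
  by move=> q hq; rewrite (hx q hq) (hx b hb).
apply/forall_inP => p hp; apply/forall_inP => q hq; by rewrite (hpe p hp) (hqF q hq).
Qed.


Variables (d : nat) (E : 'I_d -> {set {set T}}) (U U' : 'I_d -> {set T}).
Hypotheses (HEinj : injective E) (HEcl : forall k, theta_class g (E k))
  (HEall : forall C, theta_class g C -> exists k, E k = C)
  (HU : forall k, component_of g (E k) (U k))
  (HU' : forall k, component_of g (E k) (U' k))
  (HUU' : forall k, U k != U' k).

Lemma main_sec :
  let m (A B : {set T}) := #|edges_in g A :&: edges_in g B| in
  \sum_(e in edges g) \sum_(f in edges g) (edist g e f) ^ 2
  = 2 * edge_wiener g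
    + 4 * \sum_(k < d) \sum_(l < d | k < l)
            (m (U k) (U l) * m (U' k) (U' l) + m (U k) (U' l) * m (U' k) (U l)).
Proof.
move=> m.
have hk : forall k, exists c, forall h, (h \in E k) = (h \in edges g) && cut h c.
  move=> k; case: (HEcl k) => h0 hh0 ->.
  have [i hi] := edge_cut hh0.
  exists i => h; rewrite inE; case hh: (h \in edges g) => //=.
  rewrite theta_cut //; apply/existsP/idP => [[c /andP[]]|hc]; first by rewrite hi => /eqP->.
  by exists i; rewrite hi eqxx.
have [cf hcf] := fin_all_exists hk.
have hb : forall k, exists b, U k = [set y | f y (cf k) == b] /\ U' k = [set y | f y (cf k) == ~~ b].
  move=> k.
  have hC : forall a b, g a b -> ([set a; b] \in E k) = cut [set a; b] (cf k).
    move=> a b gab; rewrite hcf; have -> // : [set a; b] \in edges g by apply/edgesP; exists a, b.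
  case: (HU k) => x0 e0; case: (HU' k) => x1 e1.
  have E0 : U k = [set y | f y (cf k) == f x0 (cf k)].
    by rewrite e0; apply/setP => y; rewrite !inE (halfspace hC) eq_sym.
  have E1 : U' k = [set y | f y (cf k) == f x1 (cf k)].
    by rewrite e1; apply/setP => y; rewrite !inE (halfspace hC) eq_sym.
  exists (f x0 (cf k)); split => //; rewrite E1.
  have : f x1 (cf k) != f x0 (cf k).
    by apply: contra (HUU' k); rewrite E0 E1 => /eqP ->; exact: eqxx.
  by case: (f x1 (cf k)) (f x0 (cf k)) => [] [].
have [bf hbf] := fin_all_exists hb.
have hsurj : forall c h, h \in edges g -> cut h c -> exists k, cf k = c.
  move=> c h he hc.
  have [k hk'] : exists k, E k = [set h' in edges g | theta g h h'] by apply: HEall; exists h.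
  have : h \in E k by rewrite hk' inE he theta_cut //; apply/existsP; exists c; rewrite hc.
  rewrite hcf he /= => hck; exists k.
  have [i hi] := edge_cut he; move: hc hck; rewrite !hi => /eqP-> /eqP->. done.
have hinj : injective cf.
  move=> k l hkl; apply: HEinj; apply/setP => h; by rewrite !hcf hkl.
have hs : forall k e F, e \in edges g -> F \in edges g ->
    sv (U k) (U' k) e F = (cf k \in Sep e F).
  move=> k e F /edgesP[x [y [_ ->]]] /edgesP[u [v [_ ->]]].
  have [hU hU'] := hbf k; rewrite Sep2 /sv hU hU' !subUset !sub1set !inE.
  by case: (f x (cf k)) (f y (cf k)) (f u (cf k)) (f v (cf k)) (bf k) => [] [] [] [] [].
have hed : forall e F, e \in edges g -> F \in edges g ->
    edist g e F = \sum_k sv (U k) (U' k) e F.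
  move=> e F he hF; rewrite edist_S // (eq_bigr _ (fun k _ => hs k e F he hF)).
  rewrite -card_sumP -(card_imset _ hinj); apply: eq_card => c.
  apply/idP/imsetP => [hc|[k]]; last by rewrite inE => hk2 ->.
  case/edgesP: (he) => x [y [_ ee]]; case/edgesP: (hF) => u [v [_ eF]].
  have hxu : f x c != f u c by move: hc; rewrite ee eF Sep2 => /and4P[].
  have [h hh hch] := cut_edge hxu.
  have [k hk2] := hsurj c h hh hch.
  by exists k; rewrite // inE hk2.
have hs1 : forall k e F, e \in edges g -> F \in edges g -> sv (U k) (U' k) e F <= 1.
  by move=> k e F he hF; rewrite hs //; case: (_ \in _).
have hsq : forall e F, e \in edges g -> F \in edges g ->
  edist g e F ^ 2 = edist g e F + 2 * \sum_(k < d) \sum_(l < d | k < l)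
     (sv (U k) (U' k) e F * sv (U l) (U' l) e F).
  move=> e F he hF; rewrite hed // -mulnn big_distrlr /=.
  rewrite (sum_pairs (P := fun _ => true) (r := @nat_of_ord d)
    (w := fun k l => sv (U k) (U' k) e F * sv (U l) (U' l) e F)); last first.
  - by move=> i j _ _; rewrite mulnC.
  - exact: ord_inj.
  congr (_ + _); apply: eq_bigr => k _.
  by have := hs1 k e F he hF; case: (sv _ _ e F) => [|[|]].
rewrite (eq_bigr (fun e => \sum_(F in edges g) (edist g e F + 2 * \sum_(k < d) \sum_(l < d | k < l)
     (sv (U k) (U' k) e F * sv (U l) (U' l) e F)))); last first.
  by move=> e he; apply: eq_bigr => F hF; exact: hsq.
under eq_bigr => e _ do rewrite big_split /=.
rewrite big_split /=; congr (_ + _).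
  rewrite (sum_pairs (P := fun e => e \in edges g) (r := fun e => nat_of_ord (enum_rank e))); last first.
  - move=> e F he hF; rewrite !hed //; apply: eq_bigr => k _; rewrite /sv.
    by case: (e \subset U k) (e \subset U' k) (F \subset U k) (F \subset U' k) => [] [] [] [].
  - by move=> a b /ord_inj/enum_rank_inj.
  rewrite big1 ?add0n //.
  move=> e he; rewrite edist_S //; apply/eqP; rewrite cards_eq0; apply/eqP/setP => c.
  by case/edgesP: he => x [y [_ ->]]; rewrite Sep2 eqxx inE.
under eq_bigr => e _ do rewrite -big_distrr /=.
rewrite -big_distrr /= (_ : 4 = 2 * 2) // -mulnA; congr (2 * _).
under eq_bigr => e _ do rewrite exchange_big.
rewrite exchange_big /=.
under eq_bigr => k _ do under eq_bigr => e _ do rewrite exchange_big.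
under eq_bigr => k _ do rewrite exchange_big.
rewrite big_distrr; apply: eq_bigr => k _; rewrite big_distrr; apply: eq_bigr => l _.
exact: count_pairs.
Qed.

End Basic.

Theorem lemma3p3 (T : finType) (g : rel T)
  (Hs : simple_graph g) (Hc : connected_graph g) (Hpc : partial_cube g)
  (d : nat) (E : 'I_d -> {set {set T}})
  (HEinj : injective E)
  (HEcl : forall k, theta_class g (E k))
  (HEall : forall C, theta_class g C -> exists k, E k = C)
  (U U' : 'I_d -> {set T})
  (HU : forall k, component_of g (E k) (U k))
  (HU' : forall k, component_of g (E k) (U' k))
  (HUU' : forall k, U k != U' k) :
  let m (A B : {set T}) := #|edges_in g A :&: edges_in g B| in
  \sum_(e in edges g) \sum_(f in edges g) (edist g e f) ^ 2
  = 2 * edge_wiener g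
    + 4 * \sum_(k < d) \sum_(l < d | k < l)
            (m (U k) (U l) * m (U' k) (U' l) + m (U k) (U' l) * m (U' k) (U l)).
Proof.
case: Hpc => n [f Hf].
exact: (main_sec Hc Hs Hf HEinj HEcl HEall HU HU' HUU').
Qed.
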